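(* Let $s\ge2$ and let $\mathbb{R}^{2s}$ have basis $\{U_1,\dots,U_s,T_1,\dots,T_s\}$. Let $B_{2,s}$ be the algebraic curvature tensor on $\mathbb{R}^{2s}$ with $B_{2,s}(U_i,U_j,U_k,T_l)=\delta_{il}\delta_{jk}-\delta_{ik}\delta_{jl}$ and all components on basis vectors not obtained from these via the symmetries $B(x,y,z,w)=-B(y,x,z,w)=B(z,w,x,y)$ equal to zero. Then: (1) If $\xi_1,\xi_2\in\mathbb{R}^{2s}$ are non-zero and $B_{2,s}(\xi_1,\xi_2,\eta_1,\eta_2)=0$ and $B_{2,s}(\xi_1,\eta_1,\eta_2,\xi_2)=0$ for all $\eta_1,\eta_2\in\mathbb{R}^{2s}$, then $\xi_1,\xi_2\in\operatorname{Span}\{T_1,\dots,T_s\}$. (2) $(\mathbb{R}^{2s},B_{2,s})$ is irreducible: there is no decomposition $\mathbb{R}^{2s}=W_1\oplus W_2$ with $W_1,W_2\ne0$ such that $B_{2,s}(x_1,x_2,x_3,x_4)=0$ whenever some argument lies in $W_1$ and another lies in $W_2$.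
   Context: An algebraic curvature tensor is a $4$-tensor $A$ with $A(x,y,z,w)=-A(y,x,z,w)=A(z,w,x,y)$ and $A(x,y,z,w)+A(y,z,x,w)+A(z,x,y,w)=0$. *)

(* Defs.v *)
From HB Require Import structures.
From mathcomp Require Import all_boot all_order all_algebra.
From mathcomp Require Import reals.
Set Implicit Arguments. Unset Strict Implicit. Unset Printing Implicit Defensive.
Import Order.TTheory GRing.Theory Num.Theory.
Local Open Scope ring_scope.

(* R^{2s} is modelled as row vectors 'rV[R]_(s + s); index lshift s i is U_(i+1),
   index rshift s l is T_(l+1). *)

Definition Ubas (R : realType) (s : nat) (i : 'I_s) : 'rV[R]_(s + s) :=
  delta_mx 0 (lshift s i).
Definition Tbas (R : realType) (s : nat) (l : 'I_s) : 'rV[R]_(s + s) :=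
  delta_mx 0 (rshift s l).

Definition Bfun (R : realType) (s : nat) (i j k l : 'I_s) : R :=
  (i == l)%:R * (j == k)%:R - (i == k)%:R * (j == l)%:R.

(* components of B_{2,s} on basis vectors: B(U_i,U_j,U_k,T_l) and the
   components obtained from it via B(x,y,z,w) = -B(y,x,z,w) = B(z,w,x,y);
   all other components vanish. *)
Definition Bcomp (R : realType) (s : nat) (a b c d : 'I_(s + s)) : R :=
  match split a, split b, split c, split d with
  | inl i, inl j, inl k, inr l => Bfun R i j k l
  | inl i, inl j, inr l, inl k => - Bfun R i j k l
  | inl k, inr l, inl i, inl j => Bfun R i j k l
  | inr l, inl k, inl i, inl j => - Bfun R i j k l
  | _, _, _, _ => 0
  end.

Definition B2s (R : realType) (s : nat) (x y z w : 'rV[R]_(s + s)) : R :=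
  \sum_(a < s + s) \sum_(b < s + s) \sum_(c < s + s) \sum_(d < s + s)
    x 0 a * y 0 b * z 0 c * w 0 d * Bcomp R a b c d.

Definition Tspan (R : realType) (s : nat) : {vspace 'rV[R]_(s + s)} :=
  <<[seq Tbas R l | l <- enum 'I_s]>>%VS.

Definition splits_tensor (R : realType) (s : nat)
    (W1 W2 : {vspace 'rV[R]_(s + s)}) : Prop :=
  forall x : 'I_4 -> 'rV[R]_(s + s),
    (exists i j : 'I_4, i != j /\ x i \in W1 /\ x j \in W2) ->
    B2s (x (@inord 3 0)) (x (@inord 3 1)) (x (@inord 3 2)) (x (@inord 3 3)) = 0.

Definition irreducible_B (R : realType) (s : nat) : Prop :=
  ~ exists W1 W2 : {vspace 'rV[R]_(s + s)},
      [/\ (W1 + W2 = fullv)%VS, (W1 :&: W2 = 0)%VS,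
          W1 != 0%VS, W2 != 0%VS & splits_tensor W1 W2].

(* Main.v *)
Require Import Defs.
From HB Require Import structures.
From mathcomp Require Import all_boot all_order all_algebra.
From mathcomp Require Import reals.
From mathcomp Require Import ring.
Import Order.TTheory GRing.Theory Num.Theory.
Local Open Scope ring_scope.

Lemma spl (n : nat) (i : 'I_n) : split (lshift n i) = inl i.
Proof. exact: (unsplitK (inl i)). Qed.
Lemma spr (n : nat) (i : 'I_n) : split (rshift n i) = inr i.
Proof. exact: (unsplitK (inr i)). Qed.

Section S.
Variables (R : realType) (s : nat).

Definition ua (x : 'rV[R]_(s + s)) (i : 'I_s) := x 0 (lshift s i).
Definition ta (x : 'rV[R]_(s + s)) (i : 'I_s) := x 0 (rshift s i).
Definition dot (p q : 'I_s -> R) := \sum_k p k * q k.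

Lemma sumd (F : 'I_s -> R) u : \sum_i F i * (i == u)%:R = F u.
Proof.
rewrite (bigD1 u) //= eqxx mulr1 big1 ?addr0 // => i /negbTE ->.
by rewrite mulr0.
Qed.

Lemma B2s_e x y p q :
  B2s x (delta_mx 0 p) (delta_mx 0 q) y =
  \sum_(a < s + s) \sum_(d < s + s) x 0 a * y 0 d * Bcomp R a p q d.
Proof.
rewrite /B2s; apply: eq_bigr => a _.
rewrite (bigD1 p) //= [X in _ + X]big1 ?addr0; last first.
  move=> b nb; apply: big1 => c _; apply: big1 => d _.
  by rewrite !mxE (negbTE nb) andbF /= !(mulr0, mul0r).
rewrite (bigD1 q) //= [X in _ + X]big1 ?addr0; last first.
  move=> c nc; apply: big1 => d _.
  by rewrite !mxE (negbTE nc) andbF /= !(mulr0, mul0r).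
by apply: eq_bigr => d _; rewrite !mxE !eqxx /= mulr1 mulr1.
Qed.

Lemma sumB_a (p q : 'I_s -> R) m n :
  \sum_i \sum_k p i * q k * Bfun R i m k n = p n * q m - dot p q * (m == n)%:R.
Proof.
transitivity (\sum_i (p i * q m * (i == n)%:R - p i * q i * (m == n)%:R)).
  apply: eq_bigr => i _; rewrite /Bfun.
  transitivity (\sum_k ((p i * (i == n)%:R) * q k * (k == m)%:R
                       - (p i * (m == n)%:R) * q k * (k == i)%:R)).
    by apply: eq_bigr => k _; rewrite (eq_sym m k) (eq_sym i k); ring.
  rewrite sumrB (sumd (fun k => p i * (i == n)%:R * q k))
    (sumd (fun k => p i * (m == n)%:R * q k)); ring.
rewrite sumrB (sumd (fun i => p i * q m)) /dot mulr_suml; ring.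
Qed.

Lemma sumB_b (p q : 'I_s -> R) m n :
  \sum_i \sum_l p i * q l * Bfun R i m n l = dot p q * (m == n)%:R - p n * q m.
Proof.
transitivity (\sum_i (p i * q i * (m == n)%:R - p i * q m * (i == n)%:R)).
  apply: eq_bigr => i _; rewrite /Bfun.
  transitivity (\sum_l ((p i * (m == n)%:R) * q l * (l == i)%:R
                       - (p i * (i == n)%:R) * q l * (l == m)%:R)).
    by apply: eq_bigr => k _; rewrite (eq_sym m k) (eq_sym i k); ring.
  rewrite sumrB (sumd (fun k => p i * (m == n)%:R * q k))
    (sumd (fun k => p i * (i == n)%:R * q k)); ring.
rewrite sumrB (sumd (fun i => p i * q m)) /dot mulr_suml; ring.
Qed.

Lemma sumB_c (p q : 'I_s -> R) m n :
  \sum_l \sum_j p l * q j * Bfun R n j m l = p n * q m - (m == n)%:R * dot p q.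
Proof.
transitivity (\sum_l (p l * q m * (l == n)%:R - p l * q l * (m == n)%:R)).
  apply: eq_bigr => l _; rewrite /Bfun.
  transitivity (\sum_j ((p l * (l == n)%:R) * q j * (j == m)%:R
                       - (p l * (m == n)%:R) * q j * (j == l)%:R)).
    by apply: eq_bigr => k _; rewrite (eq_sym n l) (eq_sym n m); ring.
  rewrite sumrB (sumd (fun k => p l * (l == n)%:R * q k))
    (sumd (fun k => p l * (m == n)%:R * q k)); ring.
rewrite sumrB (sumd (fun i => p i * q m)) /dot mulr_sumr; congr (_ - _); apply: eq_bigr => i _; ring.
Qed.


Lemma evalC1 x y m n : B2s x (Ubas R m) (Tbas R n) y =
  - (ua x n * ua y m - dot (ua x) (ua y) * (m == n)%:R).
Proof.
rewrite -(sumB_a (ua x) (ua y) m n) -sumrN /Ubas /Tbas B2s_e big_split_ord /=.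
rewrite [X in _ + X = _]big1 ?addr0; last first.
  move=> l _; apply: big1 => d _.
  by rewrite /Bcomp spr spl spr; case: (split d) => ? /=; rewrite mulr0.
apply: eq_bigr => i _; rewrite big_split_ord /= [X in _ + X = _]big1 ?addr0.
  rewrite -sumrN; apply: eq_bigr => k _; rewrite /Bcomp !spl !spr /= /ua; ring.
by move=> l _; rewrite /Bcomp !spl !spr /= mulr0.
Qed.

Lemma evalC3 x y m n : B2s x (Ubas R m) (Ubas R n) y =
  (dot (ua x) (ta y) * (m == n)%:R - ua x n * ta y m)
  - (ta x n * ua y m - (m == n)%:R * dot (ta x) (ua y)).
Proof.
rewrite -(sumB_b (ua x) (ta y)) -(sumB_c (ta x) (ua y)) -sumrN.
rewrite /Ubas B2s_e big_split_ord /=; congr (_ + _).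
  apply: eq_bigr => i _; rewrite big_split_ord /= big1 ?add0r.
    apply: eq_bigr => l _; rewrite /Bcomp !spl !spr /= /ua /ta; ring.
  by move=> k _; rewrite /Bcomp !spl /= mulr0.
apply: eq_bigr => l _; rewrite big_split_ord /= [X in _ + X = _]big1 ?addr0.
  rewrite -sumrN; apply: eq_bigr => j _; rewrite /Bcomp !spl !spr /= /ua /ta; ring.
by move=> k _; rewrite /Bcomp !spl !spr /= mulr0.
Qed.

Lemma kill (p q : 'I_s -> R) : (1 < s)%N ->
  (forall m n, p n * q m = dot p q * (m == n)%:R) -> forall m n, p n * q m = 0.
Proof.
move=> hs H.
have hd : dot p q * (s%:R - 1) = 0.
  have e : dot p q = dot p q *+ s.
    rewrite {1}/dot (eq_bigr (fun _ => dot p q)) ?sumr_const ?card_ord // => k _.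
    by rewrite H eqxx mulr1.
  by rewrite mulrBr mulr1 mulr_natr -e subrr.
have d0 : dot p q = 0.
  move: hd => /eqP; rewrite mulf_eq0 => /orP [/eqP //|].
  by rewrite subr_eq0 pnatr_eq1 => /eqP hs1; rewrite hs1 in hs.
by move=> m n; rewrite H d0 mul0r.
Qed.

Lemma nz_ta x : x != 0 -> (forall i, ua x i = 0) -> exists n, ta x n != 0.
Proof.
move=> nx ha; case: (pickP (fun n => ta x n != 0)) => [n hn|h]; first by exists n.
exfalso; move/eqP: nx; apply; apply/rowP => k; rewrite mxE -(splitK k).
case: (split k) => j /=; first exact: ha.
by have := h j; rewrite /= => /negbFE /eqP.
Qed.

Lemma Tspan_mem x : (forall i, ua x i = 0) -> x \in Tspan R s.
Proof.
move=> ha; rewrite (row_sum_delta x) big_split_ord /= big1 ?add0r; last first.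
  by move=> i _; rewrite -/(ua x i) ha scale0r.
apply: rpred_sum => l _; apply: rpredZ; apply: memv_span.
by apply: (map_f (fun l => Tbas R l)); rewrite mem_enum.
Qed.

Lemma Tspan_ua v : v \in Tspan R s -> forall i, ua v i = 0.
Proof.
move=> /(@coord_span _ _ _ (in_tuple _)) -> i; rewrite /ua summxE big1 // => k _.
rewrite mxE.
have : (in_tuple [seq Tbas R l | l <- enum 'I_s])`_k \in [seq Tbas R l | l <- enum 'I_s].
  exact: mem_nth (ltn_ord k).
case/mapP => l _ ->; rewrite mxE /=.
have -> : (lshift s i == rshift s l) = false.
  apply/negP => /eqP/(congr1 val) /= h.
  by have := ltn_ord i; rewrite h ltnNge leq_addr.
by rewrite mulr0.
Qed.

End S.
Arguments ua {R s}. Arguments ta {R s}. Arguments dot {R s}. Arguments kill {R s}.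
Arguments nz_ta {R s}. Arguments Tspan_ua {R s}. Arguments Tspan_mem {R s}.
Arguments evalC1 {R s}. Arguments evalC3 {R s}.

Theorem lemma4p2 (R : realType) (s : nat) (hs : (2 <= s)%N) :
  (forall xi1 xi2 : 'rV[R]_(s + s),
     xi1 != 0 -> xi2 != 0 ->
     (forall eta1 eta2 : 'rV[R]_(s + s),
        B2s xi1 xi2 eta1 eta2 = 0 /\ B2s xi1 eta1 eta2 xi2 = 0) ->
     xi1 \in Tspan R s /\ xi2 \in Tspan R s)
  /\ irreducible_B R s.
Proof.
have P1 : forall xi1 xi2 : 'rV[R]_(s + s),
     xi1 != 0 -> xi2 != 0 ->
     (forall eta1 eta2 : 'rV[R]_(s + s),
        B2s xi1 xi2 eta1 eta2 = 0 /\ B2s xi1 eta1 eta2 xi2 = 0) ->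
     xi1 \in Tspan R s /\ xi2 \in Tspan R s.
  move=> x y nx ny H.
  have C1 m n : ua x n * ua y m = dot (ua x) (ua y) * (m == n)%:R.
    have := (H (Ubas R m) (Tbas R n)).2; rewrite evalC1 => /eqP.
    by rewrite oppr_eq0 subr_eq0 => /eqP.
  have K1 := kill _ _ hs C1.
  have C3 m n := (H (Ubas R m) (Ubas R n)).2.
  have [ha|hb] : (forall i, ua x i = 0) \/ (forall i, ua y i = 0).
    case: (pickP (fun n => ua x n != 0)) => [n hn|h]; [right => m | left => n].
      by move/eqP: (K1 m n); rewrite mulf_eq0 (negbTE hn) => /eqP.
    by have := h n; rewrite /= => /negbFE /eqP.
  - have d0 : dot (ua x) (ta y) = 0 by rewrite /dot big1 // => i _; rewrite ha mul0r.
    have C3' m n : ta x n * ua y m = dot (ta x) (ua y) * (m == n)%:R.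
      have := C3 m n; rewrite evalC3 d0 ha !mul0r subr0 sub0r => /eqP.
      by rewrite oppr_eq0 subr_eq0 [_%:R * _]mulrC => /eqP.
    have K3 := kill _ _ hs C3'.
    have [n hn] := nz_ta _ nx ha.
    split; apply: Tspan_mem => // m.
    by move/eqP: (K3 m n); rewrite mulf_eq0 (negbTE hn) => /eqP.
  - have d0 : dot (ta x) (ua y) = 0 by rewrite /dot big1 // => i _; rewrite hb mulr0.
    have C3' m n : ua x n * ta y m = dot (ua x) (ta y) * (m == n)%:R.
      have := C3 m n; rewrite evalC3 d0 hb !mulr0 subr0 => /eqP.
      by rewrite subr0 subr_eq0 eq_sym => /eqP.
    have K3 := kill _ _ hs C3'.
    have [m hm] := nz_ta _ ny hb.
    split; apply: Tspan_mem => // n.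
    by move/eqP: (K3 m n); rewrite mulf_eq0 (negbTE hm) orbF => /eqP.
split=> //.
move=> [W1 [W2 [hsum hcap hW1 hW2 hsp]]].
have i4 : forall k, (k < 4)%N -> nat_of_ord (@inord 3 k) = k by move=> k hk; rewrite inordK.
have key : forall x y, x \in W1 -> y \in W2 -> forall eta1 eta2,
    B2s x y eta1 eta2 = 0 /\ B2s x eta1 eta2 y = 0.
  move=> x y hx hy e1 e2; split.
    have := hsp (fun k : 'I_4 => match nat_of_ord k with
                   0 => x | 1 => y | 2 => e1 | _ => e2 end).
    rewrite /= !i4 //; apply; exists (inord 0), (inord 1).
    rewrite !i4 //; split => //.
    by rewrite -(inj_eq val_inj) /= !i4.
  have := hsp (fun k : 'I_4 => match nat_of_ord k with
                 0 => x | 1 => e1 | 2 => e2 | _ => y end).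
  rewrite /= !i4 //; apply; exists (inord 0), (inord 3).
  rewrite !i4 //; split => //.
  by rewrite -(inj_eq val_inj) /= !i4.
have v1 : vpick W1 != 0 by rewrite vpick0.
have v2 : vpick W2 != 0 by rewrite vpick0.
have W1T : forall x, x \in W1 -> x \in Tspan R s.
  move=> x hx; have [->|nx] := eqVneq x 0; first exact: mem0v.
  exact: (P1 x (vpick W2) nx v2 (key _ _ hx (memv_pick W2))).1.
have W2T : forall x, x \in W2 -> x \in Tspan R s.
  move=> x hx; have [->|nx] := eqVneq x 0; first exact: mem0v.
  exact: (P1 (vpick W1) x v1 nx (key _ _ (memv_pick W1) hx)).2.
have i0lt : (0 < s)%N by apply: leq_trans hs.
pose i0 : 'I_s := Ordinal i0lt.
have : Ubas R i0 \in (W1 + W2)%VS by rewrite hsum memvf.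
case/memv_addP => w1 hw1 [w2 hw2 he].
have : Ubas R i0 \in Tspan R s by rewrite he; apply: memvD; [apply: W1T | apply: W2T].
move/Tspan_ua => /(_ i0); rewrite /ua /Ubas mxE !eqxx /=.
by move/eqP; rewrite oner_eq0.
Qed.
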